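(* Let $j\geq1$, let $\lambda=(\lambda_1,\ldots,\lambda_{j-1})$ and $\mu=(\mu_{j+2},\ldots,\mu_\ell)$ be integer vectors, and let $D$ be a valid set of pairs. Assume that $\sigma^j=\sigma^{j+1}$, $(j,j+1)\notin D$, and that for each $h<j$, $(h,j)\in D$ if and only if $(h,j+1)\in D$. (a) For any integers $r$ and $s$, we have $R^D\sigma_{\lambda,r,s,\mu}=-R^D\sigma_{\lambda,s-1,r+1,\mu}$ in $\mathbb{Z}[\sigma]$. (b) For any integer $r$, we have $R^D\tau_{\lambda,r,r,\mu}=R^D\sigma_{\lambda,r,r,\mu}$ in $\mathbb{Z}[\sigma,z]$.
   Context: For each $r\geq1$, $\sigma^r=(\sigma^r_i)_{i\in\mathbb{Z}}$ is a sequence of variables with $\sigma^r_0=1$ and $\sigma^r_i=0$ for $i<0$; $\mathbb{Z}[\sigma]$ is the polynomial ring in the $\sigma^r_i$, $i,r\geq1$ (with the identification $\sigma^j=\sigma^{j+1}$ imposed by the hypothesis). For an integer sequence $\alpha$, $\sigma_\alpha:=\sigma^1_{\alpha_1}\sigma^2_{\alpha_2}\cdots$. $(\lambda,r,s,\mu)$ denotes the concatenated vector $(\lambda_1,\ldots,\lambda_{j-1},r,s,\mu_{j+2},\ldots,\mu_\ell)$. For $i<j$, $R_{ij}$ raises the $i$-th entry by 1 and lowers the $j$-th by 1; a raising operator $R$ is a monomial in the $R_{ij}$, and $R\sigma_\alpha:=\sigma_{R\alpha}$. A valid set of pairs is a finite subset $D$ of $\{(i,j)\in\mathbb{Z}^2\mid1\leq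 i<j\}$ which is an order ideal for the order $(i',j')\leq(i,j)$ iff $i'\leq i$ and $j'\leq j$. $R^D:=\prod_{1\leq i<j\leq\ell}(1-R_{ij})\prod_{(i,j)\in D}(1+R_{ij})^{-1}$, expanded as a power series and applied linearly. Let $z$ be a variable; $\tau^r:=\sigma^r$ for $r\neq j$ and $\tau^j_p:=\sigma^j_p+z\sigma^j_{p-1}$ for $p\in\mathbb{Z}$; $\tau_\alpha:=\tau^1_{\alpha_1}\tau^2_{\alpha_2}\cdots$, $R\tau_\alpha:=\tau_{R\alpha}$. *)

(* Defs.v *)
From HB Require Import structures.
From mathcomp Require Import all_boot all_order all_algebra.
Set Implicit Arguments. Unset Strict Implicit. Unset Printing Implicit Defensive.
Import Order.TTheory GRing.Theory Num.Theory.
Local Open Scope ring_scope.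

(* Pairs (i,j) are 1-indexed, as in the paper. *)
Definition valid_pairs (D : seq (nat * nat)) : Prop :=
  (forall p, p \in D -> (0 < p.1 < p.2)%N) /\
  (forall i j i' j', (i, j) \in D -> (0 < i' < j')%N -> (i' <= i)%N ->
      (j' <= j)%N -> (i', j') \in D).

(* Coefficient of R_p^k in the factor of R^D attached to a pair p with
   p = (i,j), i < j <= l:  (1 - R_p) if p \notin D,
   (1 - R_p) (1 + R_p)^{-1} = 1 + sum_{k>=1} 2 (-1)^k R_p^k  if p \in D. *)
Definition rcoef (inD : bool) (k : nat) : int :=
  if k == 0%N then 1
  else if inD then 2 * (-1) ^+ k
  else if k == 1%N then -1 else 0.

(* R^D s_a, where s : nat -> int -> A is the family (s^r_i) (r >= 1), and
   s_a = s^1_{a_1} s^2_{a_2} ... s^l_{a_l} with l = size a.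
   A raising operator R = prod_{i<j<=l} R_ij^(e_ij) sends a to
   R a with (R a)_k = a_k + sum_m e_km - sum_m e_mk.
   The power series is summed over exponent functions bounded by
   N := l * sum |a_k|; every term with a larger exponent has some negative
   entry in R a (the suffix sums of a are decreased by the exponents), so it
   vanishes as s^r_i = 0 for i < 0.  Positions are 0-indexed
   ordinals k : 'I_l, corresponding to the paper's position k+1. *)
Definition RD (A : comNzRingType) (D : seq (nat * nat)) (s : nat -> int -> A)
    (a : seq int) : A :=
  let l := size a in
  let N := (l * \sum_(x <- a) `|x|)%N in
  \sum_(f : {ffun 'I_l * 'I_l -> 'I_N.+1} |
          [forall p : 'I_l * 'I_l, ~~ (p.1 < p.2)%N ==> (f p == ord0)])
    ((\prod_(p : 'I_l * 'I_l)
         rcoef (((p.1 : nat).+1, (p.2 : nat).+1) \in D) (f p))%:~R *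
     \prod_(k : 'I_l)
        s (k : nat).+1 (nth 0 a k + \sum_(m : 'I_l)
                          ((f (k, m) : nat)%:Z - (f (m, k) : nat)%:Z))).

Definition tau (A : comNzRingType) (s : nat -> int -> A) (z : A) (j : nat) :
    nat -> int -> A :=
  fun r p => if r == j then s j p + z * s j (p - 1) else s r p.

(* Main.v *)
Require Import Defs.
From HB Require Import structures.
From mathcomp Require Import all_boot all_order all_algebra.
From mathcomp Require Import ring zify perm.
Import Order.TTheory GRing.Theory Num.Theory.
Local Open Scope ring_scope.

Definition Tm (A : comNzRingType) (D : seq (nat * nat)) (s : nat -> int -> A)
  (l : nat) (a : 'I_l -> int) (g : 'I_l * 'I_l -> nat) : A :=
  ((\prod_(p : 'I_l * 'I_l) rcoef (((p.1 : nat).+1, (p.2 : nat).+1) \in D) (g p))%:~R *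
   \prod_(k : 'I_l) s (k : nat).+1 (a k + \sum_(m : 'I_l) ((g (k, m))%:Z - (g (m, k))%:Z))).
Arguments Tm {A} D s {l} a g.

Lemma Tm_vanish (A : comNzRingType) D (s : nat -> int -> A) l (a : 'I_l -> int)
  (g : 'I_l * 'I_l -> nat) :
  (forall (r : nat) (i : int), i < 0 -> s r i = 0) ->
  (forall p : 'I_l * 'I_l, ~~ (p.1 < p.2)%N -> g p = 0%N) ->
  forall p : 'I_l * 'I_l, \sum_k `|a k| < (g p)%:Z -> Tm D s a g = 0.
Proof.
move=> sneg glow [p1 k0] /= Hp.
have lt10 : (p1 < k0)%N.
  rewrite ltnNge; apply/negP => H.
  have H' : ~~ (p1 < k0)%N by rewrite -leqNgt.
  move: Hp; rewrite (glow (p1, k0) H') /= ltNge => /negP; apply.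
  by apply: sumr_ge0 => k _; rewrite normr_ge0.
pose en t := a t + \sum_(m : 'I_l) ((g (t, m))%:Z - (g (m, t))%:Z).
have E : \sum_(t : 'I_l | (k0 <= t)%N) en t =
   \sum_(t : 'I_l | (k0 <= t)%N) a t -
   \sum_(t : 'I_l | (k0 <= t)%N) \sum_(m : 'I_l | ~~ (k0 <= m)%N) (g (m, t))%:Z.
  rewrite /en big_split /=; congr (_ + _).
  under eq_bigr do rewrite sumrB.
  rewrite sumrB.
  have -> : \sum_(t : 'I_l | (k0 <= t)%N) \sum_m (g (t, m))%:Z =
            \sum_(t : 'I_l | (k0 <= t)%N) \sum_(m : 'I_l | (k0 <= m)%N) (g (t, m))%:Z.
    apply: eq_bigr => t Ht; rewrite (bigID (fun m : 'I_l => (k0 <= m)%N)) /=.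
    rewrite [X in _ + X]big1 ?addr0 // => m Hm.
    rewrite glow //= -leqNgt; apply: leq_trans (ltnW _) Ht.
    by rewrite ltnNge.
  have -> : \sum_(t : 'I_l | (k0 <= t)%N) \sum_m (g (m, t))%:Z =
            \sum_(t : 'I_l | (k0 <= t)%N) \sum_(m : 'I_l | (k0 <= m)%N) (g (m, t))%:Z +
            \sum_(t : 'I_l | (k0 <= t)%N) \sum_(m : 'I_l | ~~ (k0 <= m)%N) (g (m, t))%:Z.
    rewrite -big_split /=; apply: eq_bigr => t _.
    by rewrite (bigID (fun m : 'I_l => (k0 <= m)%N)).
  rewrite [X in X - (_ + _)]exchange_big /=.
  by rewrite opprD addrA subrr add0r.
have Hneg : \sum_(t : 'I_l | (k0 <= t)%N) en t < 0.
  rewrite E subr_lt0.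
  apply: (le_lt_trans (y := \sum_k `|a k|)).
    rewrite [X in _ <= X](bigID (fun t : 'I_l => (k0 <= t)%N)) /=.
    apply: (le_trans (y := \sum_(t : 'I_l | (k0 <= t)%N) `|a t|)).
      by apply: ler_sum => t _; apply: ler_norm.
    by rewrite lerDl; apply: sumr_ge0 => t _; rewrite normr_ge0.
  apply: (lt_le_trans Hp).
  rewrite (bigD1 k0) //= (bigD1 p1) //=; last by rewrite -ltnNge.
  rewrite -addrA lerDl; apply: addr_ge0.
    by apply: sumr_ge0 => m _; by [].
  by apply: sumr_ge0 => t _; apply: sumr_ge0 => m _; by [].
have [/existsP [t /andP [Ht Hent]] | Hall] :=
  boolP [exists t : 'I_l, (k0 <= t)%N && (en t < 0)].
  rewrite /Tm (bigD1 t) //= sneg // mul0r mulr0 //.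
exfalso; move: Hneg; rewrite ltNge => /negP; apply.
apply: sumr_ge0 => t Ht; move/existsPn: Hall => /(_ t).
by rewrite Ht /= -leNgt.
Qed.

Arguments Tm_vanish {A D s l a g}.

Definition G (A : comNzRingType) (D : seq (nat * nat)) (s : nat -> int -> A)
  (l B : nat) (a : 'I_l -> int) : A :=
  \sum_(f : {ffun 'I_l * 'I_l -> 'I_B.+1} |
          [forall p : 'I_l * 'I_l, ~~ (p.1 < p.2)%N ==> (f p == ord0)])
   Tm D s a (fun p => nat_of_ord (f p)).
Arguments G {A} D s {l} B a.

Lemma RD_G (A : comNzRingType) D (s : nat -> int -> A) a l (H : size a = l) :
  RD D s a = G D s (l * \sum_(x <- a) `|x|) (fun k : 'I_l => nth 0 a k).
Proof. by subst l. Qed.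
Arguments RD_G {A D s a l}.

Lemma G_bound (A : comNzRingType) D (s : nat -> int -> A) l (a : 'I_l -> int) B B' :
  (forall (r : nat) (i : int), i < 0 -> s r i = 0) ->
  \sum_k `|a k| <= B%:Z -> (B <= B')%N -> G D s B a = G D s B' a.
Proof.
move=> sneg HB HBB.
have HS : (B.+1 <= B'.+1)%N by [].
rewrite /G [RHS](bigID (fun f : {ffun 'I_l * 'I_l -> 'I_B'.+1} =>
                        [forall p, (f p <= B)%N])) /=.
rewrite [X in _ = _ + X]big1 ?addr0; last first.
  move=> f /andP [Hup /forallPn [p Hp]].
  apply: (Tm_vanish sneg _ p) => //.
    move=> q Hq; move/forallP: Hup => /(_ q); rewrite Hq /= => /eqP -> //.
  apply: le_lt_trans HB _; rewrite ltz_nat ltnNge //.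
pose h (f : {ffun 'I_l * 'I_l -> 'I_B.+1}) : {ffun 'I_l * 'I_l -> 'I_B'.+1} :=
  [ffun p => widen_ord HS (f p)].
pose h' (f : {ffun 'I_l * 'I_l -> 'I_B'.+1}) : {ffun 'I_l * 'I_l -> 'I_B.+1} :=
  [ffun p => inord (f p)].
rewrite [RHS](reindex_onto h h') /=; last first.
  move=> f /andP [_ /forallP Hf]; apply/ffunP => p; rewrite !ffunE.
  by apply/val_inj => /=; rewrite inordK // ltnS.
apply: eq_big => f.
  have -> : h' (h f) = f.
    apply/ffunP => p; rewrite !ffunE; apply/val_inj => /=.
    by rewrite inordK // ltnS -ltnS.
  rewrite eqxx andbT.
  have -> : [forall p, (h f p <= B)%N] = true.
    by apply/forallP => p; rewrite ffunE /= -ltnS.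
  rewrite andbT; apply: eq_forallb => p; rewrite ffunE.
  by congr (_ ==> _); apply/eqP/eqP => [/(congr1 val) /= H|->]; apply: val_inj.
by move=> _; rewrite /Tm; congr (_ * _); [congr (_%:~R); apply: eq_bigr => p _ | apply: eq_bigr => k _]; rewrite ?ffunE //; congr (s _ (_ + _)); apply: eq_bigr => m _; rewrite !ffunE.
Qed.
Arguments G_bound {A D s l a B} B'.

Definition S (A : comNzRingType) (D : seq (nat * nat)) (s : nat -> int -> A)
  (l B : nat) (i0 i1 : 'I_l) (a : 'I_l -> int) : A :=
  \sum_(f : {ffun 'I_l * 'I_l -> 'I_B.+1} |
          [forall p : 'I_l * 'I_l, ~~ (p.1 < p.2)%N ==> (f p == ord0)] &&
          (f (i0, i1) == ord0))
   Tm D s a (fun p => nat_of_ord (f p)).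
Arguments S {A} D s {l} B i0 i1 a.

Lemma sum_pair1 l (k i0 i1 : 'I_l) :
  \sum_(m : 'I_l) (((k, m) == (i0, i1)) : nat)%:Z = (k == i0 : nat)%:Z.
Proof.
rewrite (bigD1 i1) //= big1 ?addr0; first by rewrite xpair_eqE eqxx andbT.
by move=> m Hm; rewrite xpair_eqE (negbTE Hm) andbF.
Qed.

Lemma sum_pair2 l (k i0 i1 : 'I_l) :
  \sum_(m : 'I_l) (((m, k) == (i0, i1)) : nat)%:Z = (k == i1 : nat)%:Z.
Proof.
rewrite (bigD1 i0) //= big1 ?addr0; first by rewrite xpair_eqE eqxx.
by move=> m Hm; rewrite xpair_eqE (negbTE Hm).
Qed.

Lemma G_split (A : comNzRingType) D (s : nat -> int -> A) l B (i0 i1 : 'I_l)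
  (a a' : 'I_l -> int) :
  (0 < B)%N -> (i0 < i1)%N -> ((i0 : nat).+1, (i1 : nat).+1) \notin D ->
  (forall k, a' k = a k + (k == i0 : nat)%:Z - (k == i1 : nat)%:Z) ->
  G D s B a = S D s B i0 i1 a - S D s B i0 i1 a'.
Proof.
move=> B0 i01 qD Ha'.
set q := (i0, i1).
rewrite /G /S (bigID (fun f : {ffun 'I_l * 'I_l -> 'I_B.+1} => f q == ord0)) /=.
congr (_ + _).
rewrite (bigID (fun f : {ffun 'I_l * 'I_l -> 'I_B.+1} => (f q : nat) == 1%N)) /=.
rewrite [X in _ + X]big1 ?addr0; last first.
  move=> f /andP [/andP [_ H0] H1].
  rewrite /Tm (bigD1 q) //= (negbTE qD).
  have -> : rcoef false (f q) = 0.
    rewrite /rcoef; move: H0 H1; case: (f q) => [[|[|k]] Hk] //.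
  by rewrite mul0r mul0r.
pose o1 : 'I_B.+1 := Ordinal (B0 : (1 < B.+1)%N).
pose h (f : {ffun 'I_l * 'I_l -> 'I_B.+1}) : {ffun 'I_l * 'I_l -> 'I_B.+1} :=
  [ffun p => if p == q then o1 else f p].
pose h' (f : {ffun 'I_l * 'I_l -> 'I_B.+1}) : {ffun 'I_l * 'I_l -> 'I_B.+1} :=
  [ffun p => if p == q then ord0 else f p].
rewrite (reindex_onto h h') /=; last first.
  move=> f /andP [/andP [_ H0] H1]; apply/ffunP => p; rewrite !ffunE.
  case: (p =P q) => [->|//]; by apply/val_inj; rewrite /= (eqP H1).
rewrite -sumrN.
have Hq : ~~ (q.2 < q.1)%N by rewrite /= -leqNgt ltnW.
apply: eq_big => f.
  rewrite /h /h' !ffunE eqxx /= andbT andbC.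
  have -> : ([ffun p => if p == q then ord0 else [ffun p0 => if p0 == q then o1 else f p0] p] == f) = (f q == ord0).
    apply/eqP/eqP => [<-|H]; first by rewrite ffunE eqxx.
    by apply/ffunP => p; rewrite !ffunE; case: eqP => [->|]; rewrite ?H.
  case: (f q =P ord0) => //= Hf0.
  rewrite eqxx !andbT; apply: eq_forallb => p; rewrite ffunE.
  case: (p =P q) => [->|] //=; by rewrite i01 Hf0.
  by rewrite andbF.
move=> /andP [_ /eqP Hff].
have Hf0 : f q = ord0 by rewrite -Hff ffunE eqxx.
have Hh : forall p, nat_of_ord (h f p) = (f p + (p == q))%N.
  move=> p; rewrite /h ffunE; case: eqP => [->|]; last by rewrite addn0.
  by rewrite Hf0.
rewrite /Tm (bigD1 q) //= [X in _ = - (X%:~R * _)](bigD1 q) //= (negbTE qD).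
rewrite Hh Hf0 eqxx /=.
have -> : \prod_(p : 'I_l * 'I_l | p != q) rcoef (((p.1 : nat).+1, (p.2 : nat).+1) \in D) (h f p) =
          \prod_(p : 'I_l * 'I_l | p != q) rcoef (((p.1 : nat).+1, (p.2 : nat).+1) \in D) (f p).
  by apply: eq_bigr => p Hp; rewrite Hh (negbTE Hp) addn0.
have -> : \prod_(k : 'I_l) s (k : nat).+1 (a k + \sum_(m : 'I_l) ((h f (k, m))%:Z - (h f (m, k))%:Z)) =
          \prod_(k : 'I_l) s (k : nat).+1 (a' k + \sum_(m : 'I_l) ((f (k, m))%:Z - (f (m, k))%:Z)).
  apply: eq_bigr => k _; congr (s _ _).
  under eq_bigr do rewrite !Hh !PoszD.
  rewrite Ha'.
  have -> : \sum_(i < l) ((f (k, i))%:Z + (((k, i) == q) : nat)%:Z - ((f (i, k))%:Z + (((i, k) == q) : nat)%:Z)) =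
    \sum_(i < l) ((f (k, i))%:Z - (f (i, k))%:Z) + (\sum_(i < l) (((k, i) == q) : nat)%:Z - \sum_(i < l) (((i, k) == q) : nat)%:Z).
    rewrite -sumrB -big_split /=; apply: eq_bigr => i _; ring.
  rewrite sum_pair1 sum_pair2; ring.
rewrite /rcoef /=; rewrite !rmorphM /=; ring.
Qed.
Arguments G_split {A D s l B i0 i1 a} a'.

Lemma w_lt l (i0 i1 x y : 'I_l) : (i1 : nat) = i0.+1 ->
  (x, y) != (i0, i1) -> (x, y) != (i1, i0) ->
  (tperm i0 i1 x < tperm i0 i1 y)%N = (x < y)%N.
Proof.
move=> E; rewrite !xpair_eqE.
rewrite !permE /= -!(inj_eq val_inj) /= E.
case: eqP => ?; case: eqP => ?; case: eqP => ?; case: eqP => ? /=; lia.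
Qed.

Lemma S_swap (A : comNzRingType) D (s : nat -> int -> A) l B (i0 i1 : 'I_l)
  (a a' : 'I_l -> int) :
  (i1 : nat) = i0.+1 ->
  (forall p : 'I_l * 'I_l, (p.1 < p.2)%N -> p != (i0, i1) ->
     (((tperm i0 i1 p.1 : nat).+1, (tperm i0 i1 p.2 : nat).+1) \in D) =
     (((p.1 : nat).+1, (p.2 : nat).+1) \in D)) ->
  (forall (k : 'I_l) x, s (tperm i0 i1 k : nat).+1 x = s (k : nat).+1 x) ->
  (forall k, a' k = a (tperm i0 i1 k)) ->
  S D s B i0 i1 a' = S D s B i0 i1 a.
Proof.
move=> E Dsym ssym Ha'.
set w := tperm i0 i1.
set q := (i0, i1).
have ne : i0 != i1 by apply/eqP => /(congr1 val) /=; rewrite E; lia.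
have i01 : (i0 < i1)%N by rewrite E.
pose wp (p : 'I_l * 'I_l) := (w p.1, w p.2).
have wpK : involutive wp by move=> [x y]; rewrite /wp /= !tpermK.
pose hw (f : {ffun 'I_l * 'I_l -> 'I_B.+1}) : {ffun 'I_l * 'I_l -> 'I_B.+1} :=
  [ffun p => f (wp p)].
have hwK : involutive hw by move=> f; apply/ffunP => p; rewrite !ffunE wpK.
pose P (f : {ffun 'I_l * 'I_l -> 'I_B.+1}) :=
  [forall p : 'I_l * 'I_l, ~~ (p.1 < p.2)%N ==> (f p == ord0)] && (f q == ord0).
have PP : forall f, P f -> P (hw f).
  move=> f /andP [/forallP Hup Hq]; apply/andP; split; last first.
    rewrite ffunE /wp /= /w tpermL tpermR.
    by move: (Hup (i1, i0)); rewrite /= ltnNge ltnW.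
  apply/forallP => [[x y]] /=; apply/implyP => Hxy; rewrite ffunE /wp /=.
  case: (eqVneq (x, y) (i1, i0)) => [[-> ->]|H1].
    by rewrite /w tpermL tpermR.
  case: (eqVneq (x, y) q) => [[Ex Ey]|H0].
    by move: Hxy; rewrite Ex Ey i01.
  by move: (Hup (w x, w y)); rewrite /= /w w_lt // Hxy.
have PE : forall f, P (hw f) = P f.
  move=> f; apply/idP/idP => [H|]; last exact: PP.
  by rewrite -(hwK f); apply: PP.
rewrite /S -/P [RHS](reindex_inj (can_inj hwK)) /=.
apply: eq_big => f; first exact: (esym (PE f)).
move=> /andP [/forallP Hup /eqP Hq].
rewrite /Tm; congr (_ * _).
  congr (_%:~R).
  rewrite [RHS](reindex_inj (can_inj wpK)) /=.
  apply: eq_bigr => p _; rewrite ffunE wpK.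
  have [Hz|Hnz] := eqVneq (f p) ord0.
    by rewrite Hz.
  have Hp : (p.1 < p.2)%N.
    by apply: contraNT Hnz => H; move: (Hup p); rewrite H.
  have Hpq : p != q by apply: contraNneq Hnz => ->; rewrite Hq.
  by rewrite /wp /= Dsym.
rewrite [RHS](reindex_inj (can_inj (tpermK i0 i1))) /=.
apply: eq_bigr => k _.
rewrite -/w ssym Ha'; congr (s _ (_ + _)).
rewrite [RHS](reindex_inj (can_inj (tpermK i0 i1))) /=.
by apply: eq_bigr => m _; rewrite !ffunE /wp /= -/w !tpermK.
Qed.
Arguments S_swap {A D s l B i0 i1} a a'.

Lemma G_tau (A : comNzRingType) D (s : nat -> int -> A) (z : A) j l B (i0 : 'I_l)
  (a a' : 'I_l -> int) :
  j = (i0 : nat).+1 ->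
  (forall k, a' k = a k - (k == i0 : nat)%:Z) ->
  G D (tau s z j) B a = G D s B a + z * G D s B a'.
Proof.
move=> Ej Ha'.
rewrite /G mulr_sumr -big_split /=; apply: eq_bigr => f _.
rewrite /Tm (bigD1 i0) //= [X in _ = _ * X + _](bigD1 i0) //=.
rewrite [X in _ = _ + z * (_ * X)](bigD1 i0) //= Ha' eqxx /=.
have -> : \prod_(k : 'I_l | k != i0)
     tau s z j (k : nat).+1 (a k + \sum_(m : 'I_l) ((f (k, m) : nat)%:Z - (f (m, k) : nat)%:Z)) =
   \prod_(k : 'I_l | k != i0)
     s (k : nat).+1 (a k + \sum_(m : 'I_l) ((f (k, m) : nat)%:Z - (f (m, k) : nat)%:Z)).
  apply: eq_bigr => k Hk; rewrite /tau Ej eqSS.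
  by rewrite ifF //; exact: (negbTE Hk).
have -> : \prod_(k : 'I_l | k != i0)
     s (k : nat).+1 (a' k + \sum_(m : 'I_l) ((f (k, m) : nat)%:Z - (f (m, k) : nat)%:Z)) =
   \prod_(k : 'I_l | k != i0)
     s (k : nat).+1 (a k + \sum_(m : 'I_l) ((f (k, m) : nat)%:Z - (f (m, k) : nat)%:Z)).
  by apply: eq_bigr => k Hk; rewrite Ha' (negbTE Hk) subr0.
rewrite /tau Ej eqxx.
have -> : a i0 - 1 + \sum_(m : 'I_l) ((f (i0, m) : nat)%:Z - (f (m, i0) : nat)%:Z) =
   a i0 + \sum_(m : 'I_l) ((f (i0, m) : nat)%:Z - (f (m, i0) : nat)%:Z) - 1 by ring.
ring.
Qed.
Arguments G_tau {A D s z j l B i0 a} a'.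

Lemma nth_gen (lam mu : seq int) x y (k : nat) :
  nth 0 (lam ++ [:: x; y] ++ mu) k =
  if k == size lam then x else if k == (size lam).+1 then y
  else nth 0 (lam ++ [:: 0; 0] ++ mu) k.
Proof.
rewrite !nth_cat; case: ltnP => Hk.
  by rewrite (ltn_eqF Hk) (ltn_eqF (ltn_trans Hk (ltnSn _))).
have {}Hk : (size lam <= k)%N := Hk.
case E: (k - size lam)%N => [|[|n]] /=.
- have -> : k = size lam by lia.
  by rewrite eqxx.
- have -> : k = (size lam).+1 by lia.
  by rewrite eqxx (gtn_eqF (ltnSn _)).
- have Hk2 : ((size lam).+1 < k)%N by lia.
  by rewrite (gtn_eqF Hk2) (gtn_eqF (ltn_trans (ltnSn _) Hk2)).
Qed.

Lemma Dsym_main (D : seq (nat * nat)) j l (i0 i1 : 'I_l) :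
  valid_pairs D -> (1 <= j)%N -> (i0 : nat) = j.-1 -> (i1 : nat) = j ->
  (j, j.+1) \notin D ->
  (forall h : nat, (h < j)%N -> ((h, j) \in D) = ((h, j.+1) \in D)) ->
  forall p : 'I_l * 'I_l, (p.1 < p.2)%N -> p != (i0, i1) ->
     (((tperm i0 i1 p.1 : nat).+1, (tperm i0 i1 p.2 : nat).+1) \in D) =
     (((p.1 : nat).+1, (p.2 : nat).+1) \in D).
Proof.
move=> [_ vD] j1 E0 E1 qD Dh [x y] /= Hxy Hq.
have noD : forall a b, (j <= a)%N -> (j < b)%N -> (a, b) \notin D.
  move=> a b ja jb; apply/negP => H; move/negP: qD; apply.
  by apply: (vD _ _ _ _ H) => //; rewrite j1 ltnSn.
move: Hq; rewrite xpair_eqE !permE /= -!(inj_eq val_inj) /= E0 E1 => Hq.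
case: ((x : nat) =P j.-1) => Ex; case: ((x : nat) =P j) => Ex1; case: ((y : nat) =P j.-1) => Ey; case: ((y : nat) =P j) => Ey1;
  rewrite ?E0 ?E1 ?Ex ?Ex1 ?Ey ?Ey1 ?(prednK j1) //=;
  first [ done
        | (rewrite !(negbTE (noD _ _ _ _)) //; lia)
        | (rewrite Dh //; lia)
        | (rewrite -Dh //; lia)
        | (exfalso; move: Hq; rewrite /= -!(inj_eq val_inj) /=; lia)
        | idtac ].
Qed.

Lemma sum_abs_bound (a : seq int) l : size a = l ->
  \sum_(k : 'I_l) `|nth 0 a k| <= (l * \sum_(x <- a) `|x|%N)%:Z.
Proof.
move=> <-.
have -> : \sum_(k : 'I_(size a)) `|nth 0 a k| = \sum_(x <- a) `|x|.
  by rewrite (big_nth 0) big_mkord.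
have -> : \sum_(x <- a) `|x| = (\sum_(x <- a) `|x|%N)%:Z.
  elim: a => [|x a IH]; first by rewrite !big_nil.
  by rewrite !big_cons IH PoszD abszE.
rewrite lez_nat; case: a => [|x a] /=.
  by rewrite big_nil.
by rewrite leq_pmull.
Qed.

Theorem lemma6 (A : comNzRingType) (sigma : nat -> int -> A) (j : nat)
    (lam mu : seq int) (D : seq (nat * nat)) :
  (1 <= j)%N -> size lam = j.-1 -> valid_pairs D ->
  (forall r : nat, sigma r 0 = 1) ->
  (forall (r : nat) (i : int), i < 0 -> sigma r i = 0) ->
  (forall i : int, sigma j i = sigma j.+1 i) ->
  (j, j.+1) \notin D ->
  (forall h : nat, (h < j)%N -> ((h, j) \in D) = ((h, j.+1) \in D)) ->
  (forall r s : int,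
     RD D sigma (lam ++ [:: r; s] ++ mu) =
     - RD D sigma (lam ++ [:: s - 1; r + 1] ++ mu)) /\
  (forall (z : A) (r : int),
     RD D (tau sigma z j) (lam ++ [:: r; r] ++ mu) =
     RD D sigma (lam ++ [:: r; r] ++ mu)).
Proof.
move=> j1 Hlam vD s0 sneg sj qD Dh.
set l := (size lam + (size mu).+2)%N.
have Hsz : forall x y : int, size (lam ++ [:: x; y] ++ mu) = l.
  by move=> x y; rewrite size_cat /= /l.
have li0 : (j.-1 < l)%N by rewrite /l Hlam; lia.
have li1 : (j < l)%N by rewrite /l Hlam; lia.
pose i0 : 'I_l := Ordinal li0.
pose i1 : 'I_l := Ordinal li1.
have E : (i1 : nat) = (i0 : nat).+1 by rewrite /= prednK.
have qD' : ((i0 : nat).+1, (i1 : nat).+1) \notin D by rewrite /= prednK.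
have Dsym := @Dsym_main D j l i0 i1 vD j1 (erefl _) (erefl _) qD Dh.
have ssym : forall (k : 'I_l) x, sigma (tperm i0 i1 k : nat).+1 x = sigma (k : nat).+1 x.
  move=> k x; rewrite permE /=.
  case: ifP => [/eqP ->|_]; first by rewrite /= prednK // sj.
  case: ifP => [/eqP ->|_] //=.
  by rewrite prednK // sj.
pose af (x y : int) : 'I_l -> int := fun k => nth 0 (lam ++ [:: x; y] ++ mu) k.
have afE : forall x y (k : 'I_l), af x y k =
   if (k : nat) == j.-1 then x else if (k : nat) == j then y
   else nth 0 (lam ++ [:: 0; 0] ++ mu) k.
  by move=> x y k; rewrite /af nth_gen Hlam prednK.
have jn : (j == j.-1) = false by apply/eqP; lia.
have jn' : (j.-1 == j) = false by apply/eqP; lia.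
have ne01 : (i0 == i1) = false := jn'.
have ne10 : (i1 == i0) = false := jn.
have kcase : forall (k : 'I_l), k != i0 -> k != i1 ->
    ((k : nat) == j.-1) = false /\ ((k : nat) == j) = false.
  by move=> k H0 H1; split; apply: negbTE.
have af_swap : forall x y k, af y x k = af x y (tperm i0 i1 k).
  move=> x y k.
  case: (eqVneq k i0) => [->|H0]; first by rewrite tpermL !afE /= !eqxx ?jn ?jn'.
  case: (eqVneq k i1) => [->|H1]; first by rewrite tpermR !afE /= !eqxx ?jn ?jn'.
  rewrite tpermD 1?eq_sym // !afE.
  by case: (kcase k H0 H1) => -> ->.
have af_R : forall x y (k : 'I_l), af (x + 1) (y - 1) k =
    af x y k + (k == i0 : nat)%:Z - (k == i1 : nat)%:Z.
  move=> x y k.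
  case: (eqVneq k i0) => [->|H0]; first by rewrite !afE /= !eqxx /= ?jn' ne01 subr0.
  case: (eqVneq k i1) => [->|H1]; first by rewrite !afE /= !eqxx /= ?jn /= addr0.
  rewrite !afE /= addr0 subr0.
  by case: (kcase k H0 H1) => -> ->.
have af_dec : forall x y (k : 'I_l), af (x - 1) y k = af x y k - (k == i0 : nat)%:Z.
  move=> x y k.
  case: (eqVneq k i0) => [->|H0]; first by rewrite !afE /= !eqxx.
  rewrite !afE /= subr0.
  case: (eqVneq k i1) => [->|H1]; first by rewrite /= jn.
  by case: (kcase k H0 H1) => -> ->.
have bnd : forall x y, \sum_k `|af x y k| <=
    (l * \sum_(x <- lam ++ [:: x; y] ++ mu) `|x|%N)%:Z.
  by move=> x y; apply: sum_abs_bound.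
split.
  move=> r s.
  rewrite (RD_G (Hsz r s)) (RD_G (Hsz (s - 1) (r + 1))).
  rewrite -/(af r s) -/(af (s - 1) (r + 1)).
  set N1 := (l * _)%N; set N2 := (l * _)%N.
  rewrite (G_bound (N1 + N2).+1 sneg (bnd r s)) //; last by lia.
  rewrite (G_bound (N1 + N2).+1 sneg (bnd (s - 1) (r + 1))) //; last by lia.
  have i01 : (i0 < i1)%N by rewrite E.
  have H1 : forall k, af (r + 1) (s - 1) k = af r s k + (k == i0 : nat)%:Z - (k == i1 : nat)%:Z.
    by move=> k; rewrite af_R.
  have H2 : forall k, af s r k = af (s - 1) (r + 1) k + (k == i0 : nat)%:Z - (k == i1 : nat)%:Z.
    by move=> k; rewrite -af_R subrK addrK.
  rewrite (G_split (af (r + 1) (s - 1)) (ltn0Sn _) i01 qD' H1).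
  rewrite (G_split (af s r) (ltn0Sn _) i01 qD' H2).
  have H3 : forall k, af (s - 1) (r + 1) k = af (r + 1) (s - 1) (tperm i0 i1 k).
    by move=> k; rewrite af_swap.
  have H4 : forall k, af s r k = af r s (tperm i0 i1 k).
    by move=> k; rewrite af_swap.
  rewrite (S_swap (af (r + 1) (s - 1)) (af (s - 1) (r + 1)) E Dsym ssym H3).
  rewrite (S_swap (af r s) (af s r) E Dsym ssym H4).
  by rewrite opprB.
move=> z r.
rewrite (RD_G (Hsz r r)) (RD_G (Hsz r r)) -/(af r r).
set N := (l * _)%N.
have tneg : forall (r0 : nat) (i : int), i < 0 -> tau sigma z j r0 i = 0.
  move=> r0 i Hi; rewrite /tau; case: ifP => _; last exact: sneg.
  by rewrite !sneg ?mulr0 ?addr0 //; apply: lt_trans Hi; rewrite ltrBlDr ltrDl.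
rewrite (G_bound N.+1 tneg (bnd r r)) //.
rewrite [RHS](G_bound N.+1 sneg (bnd r r)) //.
rewrite (G_tau (i0 := i0) (af (r - 1) r) (esym (prednK j1))); last first.
  by move=> k; rewrite af_dec.
have i01 : (i0 < i1)%N by rewrite E.
have H1 : forall k, af r (r - 1) k = af (r - 1) r k + (k == i0 : nat)%:Z - (k == i1 : nat)%:Z.
  by move=> k; rewrite -af_R subrK.
rewrite (G_split (af r (r - 1)) (ltn0Sn _) i01 qD' H1).
have H3 : forall k, af (r - 1) r k = af r (r - 1) (tperm i0 i1 k).
  by move=> k; rewrite af_swap.
rewrite (S_swap (af r (r - 1)) (af (r - 1) r) E Dsym ssym H3).
by rewrite subrr mulr0 addr0.
Qed.
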